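(* Let $S$ be a commutative semigroup and $H$ a subsemigroup of $S$. Suppose $p$ is a monoid congruence on $S$ such that $H$ is (the congruence class that is) the identity element of $S/p$. Let $\{H_i : i\in I\}$ be the family of all subsets $H_i$ of $S$ satisfying $H\subseteq \mathrm{Sep}\,H_i$. Then $$P(H;H_i,I)\subseteq p\subseteq P_H,$$ where $P(H;H_i,I)=\{(a,b)\in S\times S:\ H_i\dots a=H_i\dots b \text{ for all } i\in I\}$ and $P_H=\{(a,b)\in S\times S:\ H\dots a=H\dots b\}$.
   Context: For a semigroup $S$ and $A\subseteq S$, $\mathrm{Sep}\,A$ (the separator of $A$) is the set of all $x\in S$ with $xA\subseteq A$, $Ax\subseteq A$, $x(S\setminus A)\subseteq S\setminus A$ and $(S\setminus A)x\subseteq S\setminus A$. For $A\subseteq S$ and $a\in S$, $A\dots a=\{(x,y)\in S\times S:\ xay\in A\}$. A congruence $p$ on $S$ is a monoid congruence if the factor semigroup $S/p$ has an identity element. *)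

(* Defs.v *)
Section Defs.
Context {T : Type} (op : T -> T -> T).

Definition associative := forall x y z, op x (op y z) = op (op x y) z.
Definition commutative := forall x y, op x y = op y x.

Definition subsemigroup (H : T -> Prop) :=
  (exists h, H h) /\ forall x y, H x -> H y -> H (op x y).

Definition Sep (A : T -> Prop) (x : T) : Prop :=
  (forall a, A a -> A (op x a)) /\ (forall a, A a -> A (op a x)) /\
  (forall a, ~ A a -> ~ A (op x a)) /\ (forall a, ~ A a -> ~ A (op a x)).

Definition dots (A : T -> Prop) (a : T) (x y : T) : Prop := A (op (op x a) y).

Definition releq (R1 R2 : T -> T -> Prop) := forall x y, R1 x y <-> R2 x y.

Definition congruence (p : T -> T -> Prop) :=
  (forall x, p x x) /\ (forall x y, p x y -> p y x) /\
  (forall x y z, p x y -> p y z -> p x z) /\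
  (forall x y z, p x y -> p (op z x) (op z y) /\ p (op x z) (op y z)).

(* The p-class H is the identity element of S/p (so p is a monoid congruence) *)
Definition identity_class (p : T -> T -> Prop) (H : T -> Prop) :=
  (exists h, forall x, H x <-> p h x) /\
  (forall h x, H h -> p (op h x) x /\ p (op x h) x).

Definition P_fam (H : T -> Prop) (a b : T) : Prop :=
  forall A : T -> Prop, (forall h, H h -> Sep A h) -> releq (dots A a) (dots A b).

Definition P_H (H : T -> Prop) (a b : T) : Prop := releq (dots H a) (dots H b).

End Defs.

(* Main.v *)
Require Import Defs.

Theorem theorem4 (T : Type) (op : T -> T -> T)
  (Hassoc : associative op) (Hcomm : commutative op)
  (H : T -> Prop) (Hsub : subsemigroup op H)
  (p : T -> T -> Prop) (Hcong : congruence op p) (Hid : identity_class op p H) :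
  (forall a b, P_fam op H a b -> p a b) /\ (forall a b, p a b -> P_H op H a b).
Proof.
  destruct Hcong as [Hr [Hs [Ht Hc]]].
  destruct Hid as [[h0 Hh0] Hidr].
  destruct Hsub as [[h Hh] _].
  split.
  - intros a b Hab.
    assert (HS : forall g, H g -> Sep op (fun x => p a x) g).
    { intros g Hg. unfold Sep.
      repeat split.
      + intros x Hx. destruct (Hidr g x Hg) as [H1 _]. eauto.
      + intros x Hx. destruct (Hidr g x Hg) as [_ H1]. eauto.
      + intros x Hx Hc'. apply Hx. destruct (Hidr g x Hg) as [H1 _]. eauto.
      + intros x Hx Hc'. apply Hx. destruct (Hidr g x Hg) as [_ H1]. eauto. }
    specialize (Hab _ HS h h). unfold dots in Hab.
    assert (E : forall c, p (op (op h c) h) c).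
    { intros c. destruct (Hidr h c Hh) as [H1 _].
      destruct (Hidr h (op h c) Hh) as [_ H2]. eauto. }
    assert (p a (op (op h b) h)) by (apply Hab; apply Hs, E).
    eauto.
  - intros a b Hab x y. unfold dots.
    assert (Q : p (op (op x a) y) (op (op x b) y)).
    { destruct (Hc _ _ x Hab) as [H1 _]. destruct (Hc _ _ y H1) as [_ H2]. exact H2. }
    split; intro Hq; apply Hh0; apply Hh0 in Hq; eauto.
Qed.
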